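(* If $\mathbb S[\boldsymbol\kappa]$ is an unstable-negative feedback, then $\mathbb S[\boldsymbol\kappa]$ is a Hurwitz-unstable $P^-_0$ matrix.
   Context: For a reaction network with reactant coefficients $s^j_m$ and stoichiometric matrix $\mathbb S$, a $k$-Child-Selection $\boldsymbol\kappa=(\kappa,E_\kappa,J)$ is a bijection $J:\kappa\to E_\kappa$ between $k$ species and $k$ reactions with $s^{J(m)}_m>0$; its CS-matrix is $\mathbb S[\boldsymbol\kappa]_{ml}=\mathbb S_{m,J(l)}$. Hurwitz-unstable: some eigenvalue has positive real part. An unstable core is a Hurwitz-unstable CS-matrix with no Hurwitz-unstable proper principal submatrix; a $k\times k$ unstable core is an unstable-negative feedback if $\operatorname{sign}\det=(-1)^{k}$. A $P^-_0$ matrix is one whose every nonzero $j\times j$ principal minor has sign $(-1)^j$. *)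

(* Defs.v *)
From mathcomp Require Import all_boot all_order all_algebra.
From mathcomp Require Import complex.
Set Implicit Arguments. Unset Strict Implicit. Unset Printing Implicit Defensive.
Import Order.TTheory GRing.Theory Num.Theory.
Local Open Scope ring_scope.

Definition hurwitz_unstable (R : rcfType) (n : nat) (A : 'M[R]_n) : Prop :=
  exists z : R[i], eigenvalue (map_mx (fun x : R => (x%:C)%C) A) z /\ 0 < complex.Re z.

Definition psubmx (R : Type) (n : nat) (A : 'M[R]_n) (I : {set 'I_n})
  : 'M[R]_#|I| := \matrix_(i, j) A (enum_val i) (enum_val j).

(* CS-matrix of a child-selection: species kappa i (i < k), reactions J i,
   entry (m,l) = S_{kappa m, J l} *)
Definition CSmatrix (R : Type) (M E k : nat) (S : 'M[R]_(M, E))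
  (kappa : 'I_k -> 'I_M) (J : 'I_k -> 'I_E) : 'M[R]_k :=
  \matrix_(m, l) S (kappa m) (J l).

Definition unstable_core (R : rcfType) (n : nat) (A : 'M[R]_n) : Prop :=
  hurwitz_unstable A /\
  forall I : {set 'I_n}, I \proper [set: 'I_n] -> ~ hurwitz_unstable (psubmx A I).

Definition unstable_negative_feedback (R : rcfType) (n : nat) (A : 'M[R]_n) : Prop :=
  unstable_core A /\ Num.sg (\det A) = (-1) ^+ n.

Definition P0minus (R : rcfType) (n : nat) (A : 'M[R]_n) : Prop :=
  forall I : {set 'I_n}, \det (psubmx A I) != 0 ->
    Num.sg (\det (psubmx A I)) = (-1) ^+ #|I|.

(* Main.v *)
Require Import Defs.
From mathcomp Require Import all_boot all_order all_algebra.
From mathcomp Require Import polyrcf.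
From mathcomp Require Import complex.
Import Order.TTheory GRing.Theory Num.Theory.
Local Open Scope ring_scope.

Lemma stable_det_sign (R : rcfType) n (B : 'M[R]_n) :
  ~ hurwitz_unstable B -> \det B != 0 -> Num.sg (\det B) = (-1) ^+ n.
Proof.
move=> nH dB.
set p := char_poly B.
have mp : p \is monic by apply: char_poly_monic.
have lp : 0 < lead_coef p by rewrite (monicP mp) ltr01.
have [N HN] := poly_pinfty_gt_lc lp.
pose x := Num.max N 1.
have x0 : 0 <= x by rewrite le_max ler01 orbT.
have px : 0 < p.[x] by rewrite (lt_le_trans lp) // HN // le_max lexx.
have p0 : p.[0] = (-1) ^+ n * \det B by rewrite horner_coef0 char_poly_det.
have p0n : p.[0] != 0 by rewrite p0 mulf_neq0 // signr_eq0.
have p0pos : 0 < p.[0].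
  rewrite lt_neqAle eq_sym p0n /= leNgt; apply/negP => pneg.
  have [|c /andP[c0 cx] rc] := @poly_ivt R p 0 x x0.
    by rewrite (ltW pneg) (ltW px).
  apply: nH; exists (c%:C)%C; split.
    rewrite eigenvalue_root_char -map_char_poly.
    by rewrite (fmorph_root (@real_complex R)) -/p.
  rewrite /= lt_neqAle c0 andbT; apply/eqP => c0'.
  by move: rc p0n; rewrite -c0' /root => ->.
have := gtr0_sg p0pos.
rewrite p0 sgrM sgrX sgrN1 => h.
have e : (-1) ^+ n * ((-1) ^+ n) = 1 :> R by rewrite -exprD -signr_odd oddD addbb.
by rewrite -[LHS]mul1r -{1}e -mulrA h mulr1.
Qed.

Lemma det_cast (R : comNzRingType) m n (e : m = n) (A : 'M[R]_n) :
  \det (\matrix_(i, j) A (cast_ord e i) (cast_ord e j)) = \det A.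
Proof.
subst m; congr (\det _); apply/matrixP => i j; by rewrite mxE !cast_ord_id.
Qed.

Lemma psubmxT (R : comNzRingType) n (A : 'M[R]_n) :
  \det (psubmx A [set: 'I_n]) = \det A.
Proof.
have e : #|[set: 'I_n]| = n by rewrite cardsT card_ord.
rewrite -(@det_cast _ _ _ e A); congr (\det _); apply/matrixP => i j; rewrite !mxE.
have E : forall i, enum_val i = cast_ord e i.
  move=> l; apply: val_inj => /=.
  have ln : (val l < n)%N by apply: leq_trans (ltn_ord l) _; rewrite e.
  rewrite /enum_val finset.enum_setT -enumT -(nth_map _ 0) ?size_enum_ord //.
  by rewrite val_enum_ord nth_iota ?add0n.
by rewrite !E.
Qed.

Theorem mainTheorem13 (R : rcfType) (M E k : nat)
  (s S : 'M[R]_(M, E)) (kappa : 'I_k -> 'I_M) (J : 'I_k -> 'I_E) :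
  (forall m j, 0 <= s m j) ->
  injective kappa -> injective J ->
  (forall i, 0 < s (kappa i) (J i)) ->
  unstable_negative_feedback (CSmatrix S kappa J) ->
  hurwitz_unstable (CSmatrix S kappa J) /\ P0minus (CSmatrix S kappa J).
Proof.
move=> _ _ _ _ [[HU Hsub] Hdet]; split => // I dI.
have [eI|neT] := eqVneq I setT.
  subst I; move: dI; rewrite !psubmxT cardsT card_ord => _; exact: Hdet.
apply: stable_det_sign => //; apply: Hsub; by rewrite properT.
Qed.
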